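(* Let $R$ be an integral domain which is a Hilbert ring. Then every maximal ideal of $R[X]$ is power stable. In particular, for a field $K$, every maximal ideal $M$ of $K[X_1,\dots,X_n]$ satisfies $M^t\cap K[X_1,\dots,X_{n-1}] = (M\cap K[X_1,\dots,X_{n-1}])^t$ for all $t\geq 1$.
   Context: A ring is a Hilbert ring if every prime ideal is an intersection of maximal ideals. An ideal $I$ of the polynomial ring $R[X]$ over an integral domain $R$ is called power stable if $I^t\cap R = (I\cap R)^t$ for all integers $t\geq 1$. *)

(* Defs.v *)
From HB Require Import structures.
From mathcomp Require Import all_boot all_order all_algebra.
Set Implicit Arguments. Unset Strict Implicit. Unset Printing Implicit Defensive.
Import GRing.Theory.
Local Open Scope ring_scope.

Section Ideals.
Variable R : comNzRingType.

Definition is_ideal (I : R -> Prop) : Prop :=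
  [/\ I 0, (forall x y, I x -> I y -> I (x + y)) & (forall a x, I x -> I (a * x))].

Definition proper_ideal (I : R -> Prop) : Prop := is_ideal I /\ ~ I 1.

Definition prime_ideal (P : R -> Prop) : Prop :=
  proper_ideal P /\ (forall a b, P (a * b) -> P a \/ P b).

Definition maximal_ideal (M : R -> Prop) : Prop :=
  proper_ideal M /\
  (forall J : R -> Prop, is_ideal J -> (forall x, M x -> J x) ->
     (forall x, J x <-> M x) \/ (forall x, J x)).

Definition hilbert_ring : Prop :=
  forall P : R -> Prop, prime_ideal P ->
    forall x, P x <-> (forall M, maximal_ideal M -> (forall y, P y -> M y) -> M x).

Definition ideal_mul (I J : R -> Prop) : R -> Prop := fun x =>
  exists s : seq (R * R), (forall p, p \in s -> I p.1 /\ J p.2) /\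
     x = \sum_(p <- s) p.1 * p.2.

Fixpoint ideal_pow (I : R -> Prop) (t : nat) : R -> Prop :=
  match t with
  | O => fun _ => True
  | S t' => ideal_mul (ideal_pow I t') I
  end.

End Ideals.

Definition contract (R : comNzRingType) (I : {poly R} -> Prop) : R -> Prop :=
  fun r => I r%:P.

(* iterated polynomial ring K[X_1,...,X_n] = (K[X_1..X_{n-1}])[X_n] *)
Fixpoint mpoly (K : idomainType) (n : nat) : idomainType :=
  match n with
  | O => K
  | S m => ({poly (mpoly K m)} : idomainType)
  end.

(* Main.v *)
Require Import Defs.
From HB Require Import structures.
From mathcomp Require Import all_boot all_order all_algebra.
From Stdlib Require Import Classical.
Set Implicit Arguments. Unset Strict Implicit. Unset Printing Implicit Defensive.
Import GRing.Theory.
Local Open Scope ring_scope.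

Lemma minP (P : nat -> Prop) : (exists n, P n) -> exists n, P n /\ forall m, P m -> (n <= m)%N.
Proof.
move=> [n Pn].
elim: n {-2}n (leqnn n) Pn => [|k IH] n Hn Pn.
  exists n; split=> // m _; move: Hn; rewrite leqn0 => /eqP->; done.
case: (classic (exists m, P m /\ (m < n)%N)) => [[m [Pm lt]]|H].
  apply: (IH m) => //; rewrite -ltnS; exact: leq_trans lt Hn.
exists n; split=> // m Pm; rewrite leqNgt; apply/negP=> lt; apply: H; by exists m.
Qed.

Section Basic.
Variable R : comNzRingType.
Implicit Types (I J M P : R -> Prop) (a b c x y : R).

Lemma idl0 I : is_ideal I -> I 0. Proof. by case. Qed.
Lemma idlD I x y : is_ideal I -> I x -> I y -> I (x + y). Proof. by case=> _ H _; apply: H. Qed.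
Lemma idlM I a x : is_ideal I -> I x -> I (a * x). Proof. by case=> _ _ H; apply: H. Qed.
Lemma idlMr I a x : is_ideal I -> I x -> I (x * a). Proof. by move=> hI Hx; rewrite mulrC; apply: idlM. Qed.
Lemma idlN I x : is_ideal I -> I x -> I (- x).
Proof. by move=> hI Hx; rewrite -mulN1r; apply: idlM. Qed.
Lemma idlB I x y : is_ideal I -> I x -> I y -> I (x - y).
Proof. by move=> hI Hx Hy; apply: idlD => //; apply: idlN. Qed.
Lemma idl_sum I (T : eqType) (s : seq T) (F : T -> R) :
  is_ideal I -> (forall i, i \in s -> I (F i)) -> I (\sum_(i <- s) F i).
Proof.
move=> hI; elim: s => [|i s IH] H; first by rewrite big_nil; apply: idl0.
rewrite big_cons; apply: idlD => //; first by apply: H; rewrite inE eqxx.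
by apply: IH => j js; apply: H; rewrite inE js orbT.
Qed.
Lemma idl_bigP I (T : Type) (s : seq T) (Pr : pred T) (F : T -> R) :
  is_ideal I -> (forall i, Pr i -> I (F i)) -> I (\sum_(i <- s | Pr i) F i).
Proof.
move=> hI H; apply: (big_rec (fun x => I x)); first exact: idl0.
by move=> i x Pi Ix; apply: idlD => //; apply: H.
Qed.
Lemma idl_sumo I n (F : 'I_n -> R) :
  is_ideal I -> (forall i, I (F i)) -> I (\sum_(i < n) F i).
Proof. by move=> hI H; apply: idl_sum. Qed.
Lemma idl_eq I J : (forall x, I x <-> J x) -> is_ideal I -> is_ideal J.
Proof.
move=> E [h0 hD hM]; split; first by apply/E.
- by move=> x y /E Hx /E Hy; apply/E; apply: hD.
- by move=> a x /E Hx; apply/E; apply: hM.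
Qed.
Lemma idl_one I : is_ideal I -> I 1 -> forall x, I x.
Proof. by move=> hI H1 x; rewrite -(mulr1 x); apply: idlM. Qed.

Lemma idl_exp I a n : is_ideal I -> I a -> (0 < n)%N -> I (a ^+ n).
Proof. by move=> hI Ha; case: n => // n _; rewrite exprS; apply: idlMr. Qed.

Lemma prime_exp P a n : prime_ideal P -> P (a ^+ n) -> P a.
Proof.
move=> [[hP P1] Pm]; elim: n => [|n IH]; first by rewrite expr0 => H; case: P1.
by rewrite exprS => /Pm [] // /IH.
Qed.

Lemma imul_ideal I J : is_ideal I -> is_ideal (ideal_mul I J).
Proof.
move=> hI; split.
- by exists [::]; rewrite big_nil.
- move=> x y [s [Hs ->]] [s' [Hs' ->]]; exists (s ++ s'); split; last by rewrite big_cat.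
  by move=> p; rewrite mem_cat => /orP[/Hs|/Hs'].
- move=> a x [s [Hs ->]]; exists [seq (a * p.1, p.2) | p <- s]; split.
    move=> p /mapP[q qs ->] /=; have [h1 h2] := Hs q qs; split=> //; exact: idlM.
  by rewrite big_map mulr_sumr; apply: eq_bigr => p _; rewrite mulrA.
Qed.
Lemma imul_mul I J a b : I a -> J b -> ideal_mul I J (a * b).
Proof.
move=> Ha Hb; exists [:: (a, b)]; split; last by rewrite big_seq1.
by move=> p; rewrite inE => /eqP->.
Qed.
Lemma ipow_ideal I t : is_ideal I -> is_ideal (ideal_pow I t).
Proof.
move=> hI; elim: t => [|t IH] /=; first by split.
exact: imul_ideal.
Qed.

Lemma max_prime M : maximal_ideal M -> prime_ideal M.
Proof.
move=> [[hM M1] Hmax]; split=> // a b Hab.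
case: (classic (M a)) => Ma; [by left | right].
pose J := fun x => exists m c, M m /\ x = m + c * a.
have hJ : is_ideal J.
  split; first by exists 0, 0; rewrite mul0r addr0; split=> //; apply: idl0.
  - move=> x y [m [c [Hm ->]]] [m' [c' [Hm' ->]]]; exists (m + m'), (c + c'); split.
      exact: idlD.
    by rewrite mulrDl addrACA.
  - move=> d x [m [c [Hm ->]]]; exists (d * m), (d * c); split; first exact: idlM.
    by rewrite mulrDr mulrA.
have sJ : forall x, M x -> J x by move=> x Mx; exists x, 0; rewrite mul0r addr0.
have [E|All] := Hmax J hJ sJ.
  by case: Ma; apply/E; exists 0, 1; rewrite add0r mul1r; split=> //; apply: idl0.
have [m [c [Hm E1]]] := All 1.
have -> : b = m * b + c * (a * b) by rewrite mulrA -mulrDl -E1 mul1r.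
by apply: idlD => //; [apply: idlMr | apply: idlM].
Qed.

Lemma max_inv M c : maximal_ideal M -> ~ M c -> exists b z, M z /\ b * c + z = 1.
Proof.
move=> [[hM M1] Hmax] Mc.
pose J := fun x => exists m d, M m /\ x = m + d * c.
have hJ : is_ideal J.
  split; first by exists 0, 0; rewrite mul0r addr0; split=> //; apply: idl0.
  - move=> x y [m [d [Hm ->]]] [m' [d' [Hm' ->]]]; exists (m + m'), (d + d'); split.
      exact: idlD.
    by rewrite mulrDl addrACA.
  - move=> e x [m [d [Hm ->]]]; exists (e * m), (e * d); split; first exact: idlM.
    by rewrite mulrDr mulrA.
have sJ : forall x, M x -> J x by move=> x Mx; exists x, 0; rewrite mul0r addr0.
have [E|All] := Hmax J hJ sJ.
  by case: Mc; apply/E; exists 0, 1; rewrite add0r mul1r; split=> //; apply: idl0.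
have [m [d [Hm E1]]] := All 1.
by exists d, m; split=> //; rewrite addrC.
Qed.

Lemma maximal_ext M (M' : R -> Prop) : (forall x, M x <-> M' x) -> maximal_ideal M -> maximal_ideal M'.
Proof.
move=> E [[hM M1] Hmax]; split.
  by split; [exact: idl_eq E hM | move/E].
move=> J hJ sub.
have [E2|All] := Hmax J hJ (fun x Mx => sub x (proj1 (E x) Mx)); last by right.
by left=> x; rewrite E2.
Qed.

End Basic.


Section Poly.
Variable R : comNzRingType.
Implicit Types (I J N P : R -> Prop) (a b c x y : R) (p q g h f u v w r : {poly R}).
Implicit Types (JJ MM : {poly R} -> Prop).

Definition inI I p := forall i, I p`_i.

Lemma coef_size p i : p`_i != 0 -> (i < size p)%N.
Proof. by apply: contraR; rewrite -leqNgt => /leq_sizeP/(_ i (leqnn _))->. Qed.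

Lemma inI0 I : is_ideal I -> inI I 0.
Proof. by move=> hI i; rewrite coef0; apply: idl0. Qed.
Lemma inID I p q : is_ideal I -> inI I p -> inI I q -> inI I (p + q).
Proof. by move=> hI Hp Hq i; rewrite coefD; apply: idlD. Qed.
Lemma inIN I p : is_ideal I -> inI I p -> inI I (- p).
Proof. by move=> hI Hp i; rewrite coefN; apply: idlN. Qed.
Lemma inIB I p q : is_ideal I -> inI I p -> inI I q -> inI I (p - q).
Proof. by move=> hI Hp Hq; apply: inID => //; apply: inIN. Qed.
Lemma inIZ I a p : is_ideal I -> inI I p -> inI I (a *: p).
Proof. by move=> hI Hp i; rewrite coefZ; apply: idlM. Qed.
Lemma inIMl I p q : is_ideal I -> inI I p -> inI I (p * q).
Proof. by move=> hI Hp i; rewrite coefM; apply: idl_sumo => // j; apply: idlMr. Qed.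
Lemma inIMr I p q : is_ideal I -> inI I q -> inI I (p * q).
Proof. by move=> hI Hq; rewrite mulrC; apply: inIMl. Qed.
Lemma inIC I a : is_ideal I -> I a -> inI I a%:P.
Proof. by move=> hI Ha i; rewrite coefC; case: eqP => _ //; apply: idl0. Qed.

Lemma topIdx I p : is_ideal I -> ~ inI I p ->
  exists j, ~ I p`_j /\ forall k, (j < k)%N -> I p`_k.
Proof.
move=> hI Hp.
suff: forall n, (forall i, (size p - n <= i)%N -> I p`_i) \/
   exists j, ~ I p`_j /\ forall k, (j < k)%N -> I p`_k.
  case/(_ (size p)) => // H; case: Hp => i; apply: H; by rewrite subnn.
elim=> [|n [H|H]]; last by right.
  left=> i; rewrite subn0 => Hi; rewrite nth_default //; exact: idl0.
  case: (leqP (size p) n) => Hn.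
    left=> i _; apply: H; move: Hn; rewrite -subn_eq0 => /eqP->; done.
  case: (classic (I p`_(size p - n.+1)%N)) => Hc.
    left=> i Hi; case: (ltnP (size p - n.+1)%N i) => Hi2.
      by apply: H; apply: leq_trans Hi2; rewrite subnS; exact: leqSpred.
    by have -> : i = (size p - n.+1)%N by apply/eqP; rewrite eqn_leq Hi2 Hi.
  right; exists (size p - n.+1)%N; split=> // k Hk; apply: H.
  by apply: leq_trans Hk; rewrite subnS; exact: leqSpred.
Qed.

Lemma effMul I u v j l : is_ideal I ->
  (forall k, (j < k)%N -> I u`_k) -> (forall k, (l < k)%N -> I v`_k) ->
  I ((u * v)`_(j + l) - u`_j * v`_l) /\ forall k, (j + l < k)%N -> I (u * v)`_k.
Proof.
move=> hI Hu Hv; split.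
  rewrite coefM (bigD1 (@Ordinal (j + l).+1 j (leq_addr l j))) //= addKn.
  rewrite (addrC (u`_j * v`_l)) addrK; apply: idl_bigP => // i Hi.
  case: (ltnP j i) => Hji; first by apply: (idlMr _ hI); apply: Hu.
  apply: (idlM _ hI); apply: Hv.
  rewrite ltn_subRL ltn_add2r ltn_neqAle Hji andbT.
  by move: Hi; apply: contra => /eqP Hij; apply/eqP; apply: val_inj.
move=> k Hk; rewrite coefM; apply: idl_sumo => // i.
case: (ltnP j i) => Hji; first by apply: (idlMr _ hI); apply: Hu.
apply: (idlM _ hI); apply: Hv; rewrite ltn_subRL; apply: leq_ltn_trans Hk.
by rewrite leq_add2r.
Qed.


Lemma idlXC JJ a i : is_ideal JJ -> JJ a%:P -> JJ (a *: 'X^i).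
Proof. by move=> hJ Ha; rewrite -mul_polyC; apply: idlMr. Qed.

Lemma strip I JJ p j : is_ideal I -> is_ideal JJ -> (forall a, I a -> JJ a%:P) ->
  JJ p -> ~ I p`_j -> (forall k, (j < k)%N -> I p`_k) ->
  exists g, [/\ JJ g, size g = j.+1, lead_coef g = p`_j & forall k, (k <= j)%N -> g`_k = p`_k].
Proof.
move=> hI hJ IJ Jp Ij Hk.
have pj0 : p`_j != 0 by apply/eqP=> E; apply: Ij; rewrite E; apply: idl0.
pose g := \poly_(i < j.+1) p`_i.
pose d := \poly_(i < size p) (if (j < i)%N then p`_i else 0).
have Epd : p = g + d.
  apply/polyP=> i; rewrite coefD !coef_poly ltnS.
  case: (leqP i j) => Hij; first by rewrite if_same addr0.
  rewrite add0r; case: ltnP => // Hs; by rewrite nth_default.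
have Jd : JJ d.
  rewrite /d poly_def; apply: idl_sumo => // i; apply: idlXC => //.
  by case: ifP => H; apply: IJ; [apply: Hk | apply: idl0].
have sg : size g = j.+1 by rewrite size_poly_eq.
exists g; split => //.
- have -> : g = p - d by rewrite Epd addrK.
  by apply: idlB.
- by rewrite lead_coefE sg coef_poly ltnSn.
- by move=> k Hk'; rewrite coef_poly ltnS Hk'.
Qed.

Lemma normalize N JJ p : maximal_ideal N -> is_ideal JJ -> (forall a, N a -> JJ a%:P) ->
  JJ p -> ~ inI N p -> exists f, [/\ JJ f, f \is monic & (size f <= size p)%N].
Proof.
move=> hN hJ NJ Jp Np.
have hNi : is_ideal N by case: hN => [[]].
have [j [Nj Hk]] := topIdx hNi Np.
have [g [Jg sg lg _]] := strip hNi hJ NJ Jp Nj Hk.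
have [b [z [Nz Ebz]]] := max_inv hN Nj.
pose f := b *: g + z *: 'X^j.
have sf : (size f <= j.+1)%N.
  rewrite /f; apply: leq_trans (size_polyD _ _) _; rewrite geq_max.
  rewrite (leq_trans (size_scale_leq _ _)) ?sg //.
  by rewrite (leq_trans (size_scale_leq _ _)) // size_polyXn.
have fj : f`_j = 1.
  by rewrite /f coefD !coefZ coefXn eqxx mulr1 -Ebz -lg lead_coefE sg.
have sf2 : size f = j.+1.
  apply/eqP; rewrite eqn_leq sf; apply: coef_size; rewrite fj; exact: oner_neq0.
exists f; split.
- by apply: (idlD hJ); [rewrite -mul_polyC; apply: (idlM _ hJ) | apply: idlXC => //; apply: NJ].
- by apply/monicP; rewrite lead_coefE sf2.
- rewrite sf2; apply: coef_size; apply/eqP => E; apply: Nj; rewrite E; exact: idl0.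
Qed.

Lemma red I g c e : is_ideal I -> size g = e.+1 -> lead_coef g = c ->
  forall p, inI I p -> exists k, forall K, (k <= K)%N ->
    exists r w, [/\ (size r <= e)%N, inI I r & c ^+ K *: p - r = w * g].
Proof.
move=> hI sg lg p; move: {2}(size p) (leqnn (size p)) => n; elim: n p => [|n IH] p Hs Hp.
  exists 0%N => K _; exists (c ^+ K *: p), 0; split.
  - by apply: leq_trans (size_scale_leq _ _) (leq_trans Hs _).
  - exact: inIZ.
  - by rewrite subrr mul0r.
case: (leqP (size p) e) => He.
  exists 0%N => K _; exists (c ^+ K *: p), 0; split.
  - by apply: leq_trans (size_scale_leq _ _) He.
  - exact: inIZ.
  - by rewrite subrr mul0r.
set d := (size p).-1.
have sd : size p = d.+1 by rewrite /d prednK // (leq_ltn_trans _ He).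
have ed : (e <= d)%N by rewrite -ltnS -sd.
pose a := p`_d.
pose p' := c *: p - (a *: 'X^(d - e)) * g.
have sp' : (size p' <= n)%N.
  apply: (leq_trans _ (_ : d <= n)%N); last by rewrite -ltnS -sd.
  apply/leq_sizeP => m Hm.
  rewrite /p' coefB coefZ -scalerAl coefZ coefXnM.
  have -> : (m < d - e)%N = false by apply/negbTE; rewrite -leqNgt (leq_trans (leq_subr _ _) Hm).
  case: (ltngtP d m) Hm => // [Hdm|Edm] _.
    rewrite (nth_default _ (_ : size p <= m)%N) ?sd //.
    rewrite (nth_default _ (_ : size g <= m - (d - e))%N); first by rewrite !mulr0 subr0.
    rewrite sg leq_subRL; last by apply: leq_trans (leq_subr _ _) (ltnW Hdm).
    by rewrite addnS subnK.
  rewrite -Edm subKn // -lg lead_coefE sg /= /a -lead_coefE.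
  by rewrite lead_coefE sd /= mulrC subrr.
have ip' : inI I p'.
  apply: inIB => //; first exact: inIZ.
  apply: inIMl => // i; rewrite coefZ; apply: (idlMr _ hI); exact: Hp.
have [k Hk] := IH p' sp' ip'.
exists k.+1 => K HK; case: K HK => // K HK.
have [r [w [sr ir Er]]] := Hk K HK.
exists r, (w + c ^+ K *: (a *: 'X^(d - e))); split => //.
rewrite mulrDl -Er exprSr -scalerA /p' scalerBr -scalerAl.
by rewrite !scalerAl addrAC subrK.
Qed.

End Poly.


Section Det.
Variable R : comNzRingType.
Implicit Types (I J N P : R -> Prop) (a b c x y : R) (p q g h f u v w r : {poly R}).
Implicit Types (JJ MM : {poly R} -> Prop).

Lemma prodCong I (T : Type) (s : seq T) (F G : T -> R) : is_ideal I ->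
  (forall i, I (F i - G i)) -> I (\prod_(i <- s) F i - \prod_(i <- s) G i).
Proof.
move=> hI H; apply: (big_rec2 (fun x y => I (x - y))); first by rewrite subrr; apply: idl0.
move=> i x y _ Hxy.
have -> : F i * x - G i * y = F i * (x - y) + (F i - G i) * y.
  by rewrite mulrBr mulrBl addrA subrK.
by apply: idlD => //; [apply: idlM | apply: idlMr].
Qed.

Lemma detCong I n (A B : 'M[R]_n) : is_ideal I ->
  (forall i j, I (A i j - B i j)) -> I (\det A - \det B).
Proof.
move=> hI H; rewrite /determinant -sumrB.
elim/big_rec: _ => [|s x _ Ix]; first exact: idl0.
apply: idlD => //; rewrite -mulrBr; apply: (idlM _ hI).
apply: (big_ind2 (fun x y : R => I (x - y))); first by rewrite subrr; apply: idl0.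
  move=> x1 x2 y1 y2 H1 H2.
  have -> : x1 * y1 - x2 * y2 = x1 * (y1 - y2) + (x1 - x2) * y2.
    by rewrite mulrBr mulrBl addrA subrK.
  by apply: idlD => //; [apply: idlM | apply: idlMr].
by move=> i _; apply: H.
Qed.

Lemma detTrick MM N g h n : is_ideal MM -> prime_ideal N ->
  (forall a, MM a%:P -> N a) -> MM g -> ~ N (lead_coef g) -> (1 < size g)%N ->
  MM h -> inI N n -> h = 1 - n -> False.
Proof.
move=> hM hNp MN Mg Nc sg1 Mh Nn Eh.
have hN : is_ideal N by case: hNp => [[]].
set c := lead_coef g in Nc.
have [e sg] : exists e, size g = e.+2 by case: (size g) sg1 => [|[|e]] //; exists e.
have Hred : forall i : 'I_e.+1, exists k, forall K, (k <= K)%N ->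
    exists r w, [/\ (size r <= e.+1)%N, inI N r & c ^+ K *: ('X^i * n) - r = w * g].
  by move=> i; apply: (red hN sg) => //; apply: inIMr.
have [kf Hkf] := fin_all_exists Hred.
pose K := (\max_(i < e.+1) kf i)%N.
have Hrw : forall i : 'I_e.+1, exists rw : {poly R} * {poly R},
    [/\ (size rw.1 <= e.+1)%N, inI N rw.1 & c ^+ K *: ('X^i * n) - rw.1 = rw.2 * g].
  move=> i; have [r [w Hrw]] := Hkf i K (@leq_bigmax _ kf i).
  by exists (r, w).
have [F HF] := fin_all_exists Hrw.
pose E (i : 'I_e.+1) (k : nat) := c ^+ K * (k == i)%:R - (F i).1`_k.
pose A := \matrix_(i < e.+1, j < e.+1) E i j.
pose Pi (i : 'I_e.+1) := \poly_(k < e.+1) E i k.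
have AE : forall i j, A i j = E i j by move=> i j; rewrite mxE.
have PiE : forall i k, (Pi i)`_k = if (k < e.+1)%N then E i k else 0.
  by move=> i k; rewrite coef_poly.
clearbody A Pi.
have EP : forall i, Pi i = c ^+ K *: 'X^i - (F i).1.
  move=> i; apply/polyP => k; rewrite PiE coefB coefZ coefXn /E.
  case: ltnP => Hk //.
  have [s1 _ _] := HF i.
  rewrite nth_default ?(leq_trans s1 Hk) //.
  have -> : (k == i) = false by apply/negbTE; rewrite neq_ltn (leq_trans (ltn_ord i) Hk) orbT.
  by rewrite mulr0 subrr.
have MP : forall i, MM (Pi i).
  move=> i; have [_ _ Ew] := HF i.
  have -> : Pi i = (c ^+ K *: 'X^i) * h + (F i).2 * g.
    by rewrite EP -Ew Eh mulrBr mulr1 -scalerAl addrA subrK.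
  by apply: idlD => //; apply: idlM.
have Edet : (\det A)%:P = \sum_(i < e.+1) \adj A ord0 i *: Pi i.
  apply/polyP => k; rewrite coefC coef_sum.
  have -> : \sum_(i < e.+1) (\adj A ord0 i *: Pi i)`_k =
            \sum_(i < e.+1) \adj A ord0 i * (if (k < e.+1)%N then E i k else 0).
    by apply: eq_bigr => i _; rewrite coefZ PiE.
  case: ltnP => Hk; last first.
    rewrite [RHS]big1; last by move=> i _; rewrite mulr0.
    have -> : (k == 0)%N = false by apply/negbTE; rewrite -lt0n (leq_trans _ Hk).
    done.
  have := congr1 (fun M : 'M[R]_e.+1 => M ord0 (Ordinal Hk)) (mul_adj_mx A).
  rewrite [LHS]mxE [RHS]mxE => Hm.
  rewrite (_ : \sum_(i < e.+1) _ = \sum_(j < e.+1) \adj A ord0 j * A j (Ordinal Hk)).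
    by rewrite Hm -[ord0 == _]/(0 == k)%N eq_sym; case: eqP.
  by apply: eq_bigr => i _; rewrite AE.
have Nd : N (\det A).
  apply: MN; rewrite Edet; apply: idl_sumo => // i.
  by rewrite -mul_polyC; apply: idlM.
have Nd2 : N (\det A - \det ((c ^+ K)%:M : 'M[R]_e.+1)).
  apply: detCong => // i j; rewrite AE mxE /E mulr_natr.
  rewrite -[(i == j)]/(nat_of_ord i == j)%N eq_sym addrAC subrr add0r.
  by apply: idlN => //; have [_ HN _] := HF i; exact: HN.
rewrite det_scalar in Nd2.
have : N ((c ^+ K) ^+ e.+1).
  have -> : (c ^+ K) ^+ e.+1 = \det A - (\det A - (c ^+ K) ^+ e.+1).
    by rewrite opprB addrC subrK.
  exact: idlB.
by move/(prime_exp hNp)/(prime_exp hNp).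
Qed.

End Det.


Section Max.
Variable R : comNzRingType.
Implicit Types (I J N P : R -> Prop) (a b c : R) (p q g h f u v w r z y : {poly R}).
Implicit Types (JJ MM LL : {poly R} -> Prop).

Lemma contract_ideal MM : is_ideal MM -> is_ideal (contract MM).
Proof.
move=> hM; split; rewrite /contract.
- by rewrite polyC0; apply: idl0.
- by move=> x y' Hx Hy; rewrite polyCD; apply: idlD.
- by move=> a x Hx; rewrite polyCM; apply: idlM.
Qed.

Lemma true_ideal : is_ideal (fun _ : R => True). Proof. by split. Qed.

Lemma monic_size f : f \is monic -> (0 < size f)%N.
Proof. by move=> Hf; rewrite size_poly_gt0 monic_neq0. Qed.

Lemma monic_size1 f : f \is monic -> (size f <= 1)%N -> f = 1.
Proof.
move=> Hf Hs; rewrite (size1_polyC Hs); congr (_%:P).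
have : size f = 1%N by apply/eqP; rewrite eqn_leq Hs monic_size.
by move=> E; move/monicP: Hf; rewrite lead_coefE E.
Qed.

Lemma effMonic N f y d j : is_ideal N -> f \is monic -> size f = d.+1 ->
  ~ N y`_j -> (forall k, (j < k)%N -> N y`_k) ->
  N ((f * y)`_(d + j) - y`_j) /\ forall k, (d + j < k)%N -> N (f * y)`_k.
Proof.
move=> hN Hf sf Nj Hk.
have hf : forall k, (d < k)%N -> N f`_k.
  by move=> k Hk'; rewrite nth_default ?sf //; apply: idl0.
have [H1 H2] := effMul hN hf Hk.
split=> //; move: H1; move/monicP: Hf; rewrite lead_coefE sf /= => ->.
by rewrite mul1r.
Qed.

Lemma notOne N pi : prime_ideal N -> pi \is monic -> (1 < size pi)%N ->
  ~ (exists n y, inI N n /\ 1 = n + pi * y).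
Proof.
move=> [[hN N1] _] Hpi spi [n [y [Nn E]]].
case: (classic (inI N y)) => Ny.
  apply: N1; have : inI N (n + pi * y) by apply: inID => //; apply: inIMr.
  by rewrite -E => /(_ 0%N); rewrite coefC.
have [j [Nj Hk]] := topIdx hN Ny.
have [d sd] : exists d, size pi = d.+1 by case: (size pi) spi => // d; exists d.
have [H1 _] := effMonic hN Hpi sd Nj Hk.
have Ey : (pi * y)`_(d + j) = - n`_(d + j).
  have -> : pi * y = 1 - n by rewrite E addrC addKr.
  have pos : (d + j != 0)%N by rewrite -lt0n addn_gt0; rewrite sd ltnS in spi; rewrite spi.
  by rewrite coefB coefC (negbTE pos) sub0r.
apply: Nj; rewrite Ey in H1.
have -> : y`_j = - (- n`_(d + j) - y`_j) - n`_(d + j) by rewrite opprB opprK addrK.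
exact: (idlB hN (idlN hN H1) (Nn _)).
Qed.


Lemma gen N JJ f : maximal_ideal N -> is_ideal JJ -> (forall a, N a -> JJ a%:P) ->
  JJ f -> f \is monic -> (forall f', JJ f' -> f' \is monic -> (size f <= size f')%N) ->
  forall q, JJ q -> exists n y, inI N n /\ q = n + f * y.
Proof.
move=> hN hJ NJ Jf Hf Hmin q Jq.
have [e sf] : exists e, size f = e.+1.
  by move: (monic_size Hf); case: (size f) => // e; exists e.
have [k Hk] := red true_ideal sf (monicP Hf) (p := q) (fun _ => Logic.I).
have [r [w [sr _ E]]] := Hk k (leqnn k).
rewrite expr1n scale1r in E.
have Eq : q = r + f * w by rewrite mulrC -E addrC subrK.
have Jr : JJ r.
  have -> : r = q - f * w by rewrite Eq addrK.
  exact: (idlB hJ Jq (idlMr _ hJ Jf)).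
case: (classic (inI N r)) => Nr; first by exists r, w.
have [f' [Jf' Hf' sf']] := normalize hN hJ NJ Jr Nr.
have := Hmin f' Jf' Hf'; rewrite sf => H.
by have := leq_trans H (leq_trans sf' sr); rewrite ltnn.
Qed.

Lemma monic_exists N JJ : maximal_ideal N -> is_ideal JJ -> (forall a, N a -> JJ a%:P) ->
  (exists q, JJ q /\ ~ inI N q) ->
  exists f, [/\ JJ f, f \is monic & forall f', JJ f' -> f' \is monic -> (size f <= size f')%N].
Proof.
move=> hN hJ NJ [q [Jq Nq]].
have [f0 [Jf0 Hf0 _]] := normalize hN hJ NJ Jq Nq.
have [s [[f [Jf Hf sf]] Hmin]] := minP (P := fun s => exists f, [/\ JJ f, f \is monic & size f = s])
  (ex_intro _ (size f0) (ex_intro _ f0 (And3 Jf0 Hf0 erefl))).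
exists f; split => // f' Jf' Hf'; rewrite sf; apply: Hmin; by exists f'.
Qed.


Lemma lead_notin N p : is_ideal N -> ~ N 1 -> p \is monic -> ~ inI N p.
Proof.
move=> hN N1 Hp Np; apply: N1; move/monicP: Hp => <-; rewrite lead_coefE; exact: Np.
Qed.

Lemma maxExist N JJ : maximal_ideal N -> is_ideal JJ -> ~ JJ 1 ->
  (forall a, N a -> JJ a%:P) -> (exists q, JJ q /\ ~ inI N q) ->
  exists MM, maximal_ideal MM /\ forall q, JJ q -> MM q.
Proof.
move=> hN hJ J1 NJ ex.
have hNp := max_prime hN.
have [[hNi N1] _] := hN.
have [f [Jf Hf fmin]] := monic_exists hN hJ NJ ex.
have genf := gen hN hJ NJ Jf Hf fmin.
have sf2 : (1 < size f)%N.
  rewrite ltnNge; apply/negP => H; apply: J1; by rewrite -(monic_size1 Hf H).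
pose S := fun s => exists pi, [/\ pi \is monic, size pi = s, (1 < s)%N &
   exists n y, inI N n /\ f = n + pi * y].
have S0 : S (size f).
  exists f; split => //; exists 0, 1; split; [exact: inI0 | by rewrite add0r mulr1].
have [s [[pi [Hpi spi s2 [n0 [y0 [Nn0 Ef]]]]] Smin]] := minP (ex_intro S _ S0).
pose MM := fun q => exists n y, inI N n /\ q = n + pi * y.
have hM : is_ideal MM.
  split.
  - by exists 0, 0; split; [exact: inI0 | by rewrite mulr0 addr0].
  - move=> x1 x2 [n [y [Nn ->]]] [n' [y' [Nn' ->]]]; exists (n + n'), (y + y'); split.
      exact: inID.
    by rewrite mulrDr addrACA.
  - move=> a x [n [y [Nn ->]]]; exists (a * n), (a * y); split; first exact: inIMr.
    by rewrite mulrDr mulrCA.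
have NM : forall a, N a -> MM a%:P.
  by move=> a Na; exists a%:P, 0; split; [exact: inIC | by rewrite mulr0 addr0].
have JM : forall q, JJ q -> MM q.
  move=> q Jq; have [n [y [Nn ->]]] := genf q Jq.
  rewrite Ef.
  exists (n + n0 * y), (y0 * y); split; first by apply: inID => //; apply: inIMl.
  by rewrite mulrDl addrA mulrA.
exists MM; split => //.
split; first by split => //; apply: (notOne hNp Hpi); rewrite spi.
move=> LL hL ML.
case: (classic (LL 1)) => L1; first by right; apply: idl_one.
left.
have NL : forall a, N a -> LL a%:P by move=> a Na; apply: ML; apply: NM.
have Lpi : LL pi by apply: ML; exists 0, 1; split; [exact: inI0 | by rewrite add0r mulr1].
have piN := lead_notin hNi N1 Hpi.
have [mu [Lmu Hmu mumin]] := monic_exists hN hL NL (ex_intro _ pi (conj Lpi piN)).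
have genmu := gen hN hL NL Lmu Hmu mumin.
have smu2 : (1 < size mu)%N.
  rewrite ltnNge; apply/negP => H; apply: L1; by rewrite -(monic_size1 Hmu H).
have Smu : S (size mu).
  exists mu; split => //; apply: genmu; apply: ML; exact: JM.
have le1 := Smin _ Smu.
have [n1 [z [Nn1 Epi]]] := genmu pi Lpi.
have [dpi spiE] : exists d, size pi = d.+1 by case: (size pi) spi s2 => [|d]; [move=> <- | exists d].
have [dmu smuE] : exists d, size mu = d.+1 by case: (size mu) smu2 => [|d] //; exists d.
have Emz : mu * z = pi - n1 by rewrite Epi addrC addKr.
have zN : ~ inI N z.
  move=> Nz; apply: piN; rewrite Epi; apply: inID => //; exact: inIMr.
have [j [Nj Hk]] := topIdx hNi zN.
have [H1 H2] := effMonic hNi Hmu smuE Nj Hk.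
have jle : (dmu + j <= dpi)%N.
  rewrite leqNgt; apply/negP => Hlt; apply: Nj.
  move: H1; rewrite Emz coefB (nth_default _ (_ : size pi <= dmu + j)%N) ?spiE // sub0r => H1.
  have -> : z`_j = - (- n1`_(dmu + j) - z`_j) - n1`_(dmu + j) by rewrite opprB opprK addrK.
  exact: (idlB hNi (idlN hNi H1) (Nn1 _)).
have dle : (dpi <= dmu)%N by rewrite -ltnS -spiE -smuE spi.
have j0 : j = 0%N.
  by apply/eqP; rewrite -leqn0 -(leq_add2l dmu) addn0 (leq_trans jle dle).
have ed : dmu = dpi.
  by apply/eqP; rewrite eqn_leq -{1}(addn0 dmu) -{1}j0 jle dle.
subst j.
have N1z : N (1 - z`_0).
  move: H1; rewrite addn0 Emz coefB ed.
  have -> : pi`_dpi = 1 by move/monicP: Hpi; rewrite lead_coefE spiE.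
  move=> H1.
  have -> : 1 - z`_0 = (1 - n1`_dpi - z`_0) + n1`_dpi by rewrite addrAC subrK.
  exact: (idlD hNi H1 (Nn1 _)).
have Nz1 : inI N (z - 1).
  move=> k; rewrite coefB coefC; case: k => [|k] /=.
    by rewrite -opprB; apply: idlN.
  by rewrite subr0; apply: Hk.
have Mmu : MM mu.
  exists (- (n1 + mu * (z - 1))), 1; split.
    by apply: inIN => //; apply: inID => //; apply: inIMr.
  by rewrite mulr1 Epi mulrBr mulr1 opprD opprB addrACA addNr add0r subrK.
move=> x; split => [Lx | Mx]; last exact: ML.
have [n [y [Nn ->]]] := genmu x Lx.
have [n2 [y2 [Nn2 ->]]] := Mmu.
exists (n + n2 * y), (y2 * y); split; first by apply: inID => //; apply: inIMl.
by rewrite mulrDl addrA mulrA.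
Qed.

End Max.


Section Hil.
Variable R : comNzRingType.
Implicit Types (I J N P : R -> Prop) (a b c d : R) (p q g h f u v w r z y x : {poly R}).
Implicit Types (JJ MM LL QQ : {poly R} -> Prop).

Lemma inI_contract JJ q : is_ideal JJ -> inI (contract JJ) q -> JJ q.
Proof.
move=> hJ Hq; rewrite -[q]coefK poly_def; apply: idl_sumo => // i.
by apply: idlXC => //; apply: Hq.
Qed.

Lemma size1C g : (size g <= 1)%N -> g = (lead_coef g)%:P.
Proof.
move=> H; rewrite {1}(size1_polyC H) lead_coefE.
by case: (size g) H => [|[|]] //= _; rewrite nth_default.
Qed.

Lemma contract_prime MM : prime_ideal MM -> prime_ideal (contract MM).
Proof.
move=> [[hM M1] Mp]; split; first split.
- exact: contract_ideal.
- by rewrite /contract polyC1.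
- by move=> a b; rewrite /contract polyCM => /Mp.
Qed.

Lemma hilb_avoid P c : hilbert_ring R -> prime_ideal P -> ~ P c ->
  exists N, [/\ maximal_ideal N, forall e, P e -> N e & ~ N c].
Proof.
move=> hR hP Pc; apply: NNPP => H; apply: Pc; apply/(hR P hP) => N hN PN.
apply: NNPP => Nc; apply: H; by exists N.
Qed.

Lemma notInContract MM : maximal_ideal MM -> exists q, MM q /\ ~ inI (contract MM) q.
Proof.
move=> hM; have [[hMi M1] Hmax] := hM.
have hp := contract_ideal hMi.
apply: NNPP => H.
have sub : forall q, MM q -> inI (contract MM) q.
  by move=> q Mq; apply: NNPP => Nq; apply: H; exists q.
pose JJ := fun q => exists a b : {poly R}, inI (contract MM) a /\ q = a + 'X * b.
have hJ : is_ideal JJ.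
  split.
  - by exists 0, 0; split; [exact: inI0 | by rewrite mulr0 addr0].
  - move=> x1 x2 [a1 [b1 [Ha ->]]] [a2 [b2 [Ha' ->]]]; exists (a1 + a2), (b1 + b2); split.
      exact: inID.
    by rewrite mulrDr addrACA.
  - move=> e x1 [a1 [b1 [Ha ->]]]; exists (e * a1), (e * b1); split; first exact: inIMr.
    by rewrite mulrDr mulrCA.
have MJ : forall q, MM q -> JJ q by move=> q Mq; exists q, 0; split; [exact: sub | rewrite mulr0 addr0].
have [E|All] := Hmax JJ hJ MJ.
  have : MM 'X by apply/E; exists 0, 1; split; [exact: inI0 | by rewrite add0r mulr1].
  move/sub/(_ 1%N); rewrite coefX /contract eqxx polyC1; exact: M1.
have [a1 [b1 [Ha E1]]] := All 1.
apply: M1; move: (Ha 0%N); rewrite /contract.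
have -> : a1`_0 = 1 by move: (congr1 (fun p => p`_0) E1); rewrite coefD coefXM /= coef1 addr0 => <-.
by rewrite polyC1.
Qed.

Lemma contract_max MM : hilbert_ring R -> maximal_ideal MM -> maximal_ideal (contract MM).
Proof.
move=> hR hM; have [[hMi M1] Hmax] := hM.
have hp := contract_ideal hMi.
have hpp := contract_prime (max_prime hM).
have [q [Mq pq]] := notInContract hM.
have [j [pj Hk]] := topIdx hp pq.
have [g [Mg sg lg _]] := strip hp hMi (fun a Ha => Ha) Mq pj Hk.
rewrite -lg in pj.
have sg2 : (1 < size g)%N.
  rewrite ltnNge; apply/negP => H; apply: pj; rewrite /contract -size1C //.
have [N [hN pN Nc]] := hilb_avoid hR hpp pj.
have hNp := max_prime hN.
have [[hNi N1] _] := hN.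
pose JJ := fun x => exists m n, [/\ MM m, inI N n & x = m + n].
have hJ : is_ideal JJ.
  split.
  - by exists 0, 0; split; [exact: idl0 | exact: inI0 | by rewrite addr0].
  - move=> x1 x2 [m [n [Hm Hn ->]]] [m' [n' [Hm' Hn' ->]]]; exists (m + m'), (n + n'); split.
    + exact: idlD.
    + exact: inID.
    + by rewrite addrACA.
  - move=> e x1 [m [n [Hm Hn ->]]]; exists (e * m), (e * n); split.
    + exact: idlM.
    + exact: inIMr.
    + by rewrite mulrDr.
have MJ : forall x, MM x -> JJ x by move=> x Mx; exists x, 0; split; [ | exact: inI0 | rewrite addr0].
have [E|All] := Hmax JJ hJ MJ.
  apply: (maximal_ext _ hN) => a; split; last exact: pN.
  by move=> Na; rewrite /contract; apply/E; exists 0, a%:P; split; [exact: idl0 | exact: inIC | rewrite add0r].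
have [m [n [Mm Nn E1]]] := All 1.
exfalso; apply: (detTrick hMi hNp (fun a Ha => pN a Ha) Mg Nc sg2 Mm Nn).
by rewrite E1 addrK.
Qed.



Lemma hilbertX : hilbert_ring R -> hilbert_ring [the comNzRingType of {poly R}].
Proof.
move=> hR QQ hQ x; split; first by move=> Qx M hM QM; apply: QM.
move=> H; apply: NNPP => Qx.
suff [M [hM QM Mx]] : exists M, [/\ maximal_ideal M, forall q, QQ q -> M q & ~ M x].
  by apply: Mx; apply: H.
have [[hQi Q1] Qp] := hQ.
pose P := contract QQ.
have hPp : prime_ideal P := contract_prime hQ.
have [[hPi P1] Pp] := hPp.
case: (classic (exists q, QQ q /\ ~ inI P q)) => [[q [Qq Pq]] | Hn].

  have PQ : forall a, P a -> QQ a%:P by [].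
  have [j [Pj Hk]] := topIdx hPi Pq.
  have [g0 [Qg0 _ lg0 _]] := strip hPi hQi PQ Qq Pj Hk.
  rewrite -lg0 in Pj.
  have [s [[g [Qg Pc sg]] Smin]] := minP (P := fun s => exists g, [/\ QQ g, ~ P (lead_coef g) & size g = s])
    (ex_intro _ _ (ex_intro _ g0 (And3 Qg0 Pj erefl))).
  subst s; set c := lead_coef g in Pc.
  pose LL := fun q => exists q0 y, QQ q0 /\ q = q0 + x * y.
  have hL : is_ideal LL.
    split.
    - by exists 0, 0; split; [exact: idl0 | by rewrite mulr0 addr0].
    - move=> x1 x2 [n [y [Nn ->]]] [n' [y' [Nn' ->]]]; exists (n + n'), (y + y'); split.
        exact: idlD.
      by rewrite mulrDr addrACA.
    - move=> a x1 [n [y [Nn ->]]]; exists (a * n), (a * y); split; first exact: idlM.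
      by rewrite mulrDr mulrCA.
  have QL : forall q, QQ q -> LL q by move=> q1 Q1'; exists q1, 0; rewrite mulr0 addr0.
  have PL : forall a, P a -> LL a%:P by move=> a Pa; apply: QL.
  have [s [[l [Ll Pc' sl]] Tmin]] := minP (P := fun s => exists l, [/\ LL l, ~ P (lead_coef l) & size l = s])
    (ex_intro _ _ (ex_intro _ g (And3 (QL g Qg) Pc erefl))).
  subst s; set c' := lead_coef l in Pc'.
  have [e sl] : exists e, size l = e.+1.
    case E: (size l) => [|e]; last by exists e.
    by exfalso; apply: Pc'; rewrite /c' lead_coefE E nth_default ?E //; apply: idl0.
  have small : forall r, LL r -> (size r <= e)%N -> inI P r.
    move=> r Lr sr; apply: NNPP => Pr.
    have [j' [Pj' Hk']] := topIdx hPi Pr.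
    have [l' [Ll' sl' ll' _]] := strip hPi hL PL Lr Pj' Hk'.
    rewrite -ll' in Pj'.
    have := Tmin _ (ex_intro _ l' (And3 Ll' Pj' erefl)); rewrite sl sl' ltnS => Hq.
    have : (j' < size r)%N.
      apply: coef_size; apply/eqP => E0; apply: Pj'; rewrite ll' E0; exact: idl0.
    by move=> H2; have := leq_trans H2 (leq_trans sr Hq); rewrite ltnn.
  have redL : forall p, LL p -> exists k r w, [/\ (size r <= e)%N, QQ r & c' ^+ k *: p - r = w * l].
    move=> p Lp; have [k Hk2] := red (@true_ideal R) sl (erefl c') (p := p) (fun _ => Logic.I).
    have [r [w [sr _ E]]] := Hk2 k (leqnn k).
    exists k, r, w; split => //; apply: inI_contract => //; apply: small => //.
    have -> : r = c' ^+ k *: p - w * l by rewrite -E opprB addrC subrK.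
    by apply: idlB => //; [rewrite -mul_polyC; apply: idlM | apply: idlM].
  have notQl : ~ QQ l.
    move=> Ql; have [k [r [w [_ Qr E]]]] := redL x (ex_intro _ 0 (ex_intro _ 1 (conj (idl0 hQi) (esym (etrans (add0r _) (mulr1 _)))))).
    have : QQ ((c' ^+ k)%:P * x).
      rewrite mul_polyC; have -> : c' ^+ k *: x = r + w * l by rewrite -E addrC subrK.
      by apply: idlD => //; apply: idlM.
    case/Qp => // /(prime_exp hPp); exact: Pc'.
  have [k [r [w [sr Qr Ew]]]] := redL g (QL g Qg).
  have Qw : QQ w.
    have : QQ (w * l).
      rewrite -Ew; apply: idlB => //; rewrite -mul_polyC; exact: idlM.
    by case/Qp.
  have e0 : e = 0%N.
    apply: NNPP => ne0.
    have le := Tmin _ (ex_intro _ g (And3 (QL g Qg) Pc erefl)).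
    have [dg sgE] : exists d0 : nat, size g = d0.+1.
      by move: le; rewrite sl; case: (size g) => // d0 _; exists d0.
    have edg : (e <= dg)%N by move: le; rewrite sl sgE.
    have cdg : (w * l)`_dg = c' ^+ k * c.
      rewrite -Ew coefB coefZ (nth_default _ (_ : size r <= dg)%N) ?(leq_trans sr edg) // subr0.
      by rewrite /c lead_coefE sgE.
    have Pck : ~ P (c' ^+ k * c) by case/Pp => // /(prime_exp hPp).
    have Pw : ~ inI P w.
      by move=> Pw; apply: Pck; rewrite -cdg; apply: inIMl.
    have [j' [Pj' Hkw]] := topIdx hPi Pw.
    have Hl : forall k0, (e < k0)%N -> P l`_k0.
      by move=> k0 H0; rewrite nth_default ?sl //; apply: idl0.
    have [H1 H2] := effMul hPi Hkw Hl.
    have le' : (dg <= j' + e)%N.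
      rewrite leqNgt; apply/negP => Hq; apply: Pck; rewrite -cdg; exact: H2.
    have ge' : (j' + e <= dg)%N.
      rewrite leqNgt; apply/negP => Hq; move: H1.
      have lc : l`_e = c' by rewrite /c' lead_coefE sl.
      rewrite -Ew coefB coefZ (nth_default _ (_ : size g <= j' + e)%N) ?sgE //.
      rewrite (nth_default _ (_ : size r <= j' + e)%N); last first.
        by apply: leq_trans (leq_trans sr edg) (ltnW Hq).
      rewrite mulr0 subr0 sub0r lc => H1.
      by move: (idlN hPi H1); rewrite opprK => /Pp [].
    have jdg : (j' < dg)%N.
      have : (j' + e = dg)%N by apply/eqP; rewrite eqn_leq le' ge'.
      move=> <-; rewrite -{1}(addn0 j') ltn_add2l lt0n; exact/eqP.
    have [g' [Qg' sg' lg' _]] := strip hPi hQi PQ Qw Pj' Hkw.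
    rewrite -lg' in Pj'.
    have := Smin _ (ex_intro _ g' (And3 Qg' Pj' erefl)); rewrite sg' sgE ltnS => Hq.
    by have := leq_ltn_trans Hq jdg; rewrite ltnn.
  subst e.
  have El : l = c'%:P by apply: size1C; rewrite sl.
  have [q0 [y [Qq0 Ed]]] : LL c'%:P by rewrite -El.
  have Pcd : ~ P (c * c') by case/Pp.
  have [N [hN PN Ncd]] := hilb_avoid hR hPp Pcd.
  have hNp := max_prime hN.
  have [[hNi N1] Nmax] := hN.
  have Nc : ~ N c by move=> Nc; apply: Ncd; apply: idlMr.
  pose JJ := fun q => exists q1 n, [/\ QQ q1, inI N n & q = q1 + n].
  have hJ : is_ideal JJ.
    split.
    - by exists 0, 0; split; [exact: idl0 | exact: inI0 | by rewrite addr0].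
    - move=> x1 x2 [m [n [Hm Hn ->]]] [m' [n' [Hm' Hn' ->]]]; exists (m + m'), (n + n'); split.
      + exact: idlD.
      + exact: inID.
      + by rewrite addrACA.
    - move=> a x1 [m [n [Hm Hn ->]]]; exists (a * m), (a * n); split.
      + exact: idlM.
      + exact: inIMr.
      + by rewrite mulrDr.
  have QJ : forall q, QQ q -> JJ q by move=> q1 Q1'; exists q1, 0; split; [ | exact: inI0 | rewrite addr0].
  have NJ : forall a, N a -> JJ a%:P.
    by move=> a Na; exists 0, a%:P; split; [exact: idl0 | exact: inIC | rewrite add0r].
  have sg2 : (1 < size g)%N.
    rewrite ltnNge; apply/negP => Hq; apply: Pc; rewrite /P /contract -size1C //.
  have J1 : ~ JJ 1.
    move=> [m [n [Qm Nn E1]]].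
    apply: (detTrick hQi hNp (fun a Ha => PN a Ha) Qg Nc sg2 Qm Nn).
    by rewrite E1 addrK.
  have gN : ~ inI N g by move/(_ (size g).-1); rewrite -lead_coefE.
  have [M [hM JM]] := maxExist hN hJ J1 NJ (ex_intro _ g (conj (QJ g Qg) gN)).
  exists M; split => //; first by move=> q1 Q1'; apply: JM; apply: QJ.
  move=> Mx; have [[hMi M1] _] := hM.
  have Md : M c'%:P by rewrite Ed; exact: (idlD hMi (JM _ (QJ _ Qq0)) (idlMr _ hMi Mx)).
  have [E|All] := Nmax (contract M) (contract_ideal hMi) (fun a Na => JM _ (NJ a Na)).
    by apply: Ncd; exact: (idlM _ hNi (proj1 (E _) Md)).
  by apply: M1; move: (All 1); rewrite /contract polyC1.
have QP : forall q, QQ q -> inI P q by move=> q Qq; apply: NNPP => Nq; apply: Hn; exists q.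
have Px : ~ inI P x by move=> Px; apply: Qx; exact: inI_contract.
have [j [Pj Hk]] := topIdx hPi Px.
have [N [hN PN Nj]] := hilb_avoid hR hPp Pj.
have [[hNi N1] _] := hN.
have [_ Np] := max_prime hN.
pose u := 1 + 'X * x.
pose JJ := fun q => exists n y, inI N n /\ q = n + u * y.
have hJ : is_ideal JJ.
  split.
  - by exists 0, 0; split; [exact: inI0 | by rewrite mulr0 addr0].
  - move=> x1 x2 [n [y [Nn ->]]] [n' [y' [Nn' ->]]]; exists (n + n'), (y + y'); split.
      exact: inID.
    by rewrite mulrDr addrACA.
  - move=> a x1 [n [y [Nn ->]]]; exists (a * n), (a * y); split; first exact: inIMr.
    by rewrite mulrDr mulrCA.
have NJ : forall a, N a -> JJ a%:P.
  by move=> a Na; exists a%:P, 0; split; [exact: inIC | by rewrite mulr0 addr0].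
have Ju : JJ u by exists 0, 1; split; [exact: inI0 | by rewrite add0r mulr1].
have u0 : u`_0 = 1 by rewrite /u coefD coefXM coef1 addr0.
have uN : ~ inI N u by move/(_ 0%N); rewrite u0.
have J1 : ~ JJ 1.
  move=> [n [y [Nn E]]].
  have Nx : ~ inI N x by move=> /(_ j).
  have [j' [Nj' Hk']] := topIdx hNi Nx.
  have Hu : forall k, (j'.+1 < k)%N -> N u`_k.
    move=> k Hk2; rewrite /u coefD coefXM coef1.
    case: k Hk2 => // k Hk2; rewrite add0r /=; apply: Hk'; exact: Hk2.
  have uj : u`_j'.+1 = x`_j' by rewrite /u coefD coefXM coef1 add0r.
  case: (classic (inI N y)) => Ny.
    apply: N1; have : inI N (n + u * y) by apply: inID => //; apply: inIMr.
    by rewrite -E => /(_ 0%N); rewrite coefC.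
  have [l [Nl Hl]] := topIdx hNi Ny.
  have [H1 _] := effMul hNi Hu Hl.
  have Ey : (u * y)`_(j'.+1 + l) = - n`_(j'.+1 + l).
    have -> : u * y = 1 - n by rewrite E addrC addKr.
    by rewrite coefB coefC addSn sub0r.
  rewrite Ey uj in H1.
  have : N (x`_j' * y`_l).
    have -> : x`_j' * y`_l = - (- n`_(j'.+1 + l) - x`_j' * y`_l) - n`_(j'.+1 + l).
      by rewrite opprB opprK addrK.
    exact: (idlB hNi (idlN hNi H1) (Nn _)).
  by case/Np.
have [M [hM JM]] := maxExist hN hJ J1 NJ (ex_intro _ u (conj Ju uN)).
exists M; split => //.
  move=> q Qq; apply: JM; exists q, 0; split; last by rewrite mulr0 addr0.
  by move=> i; apply: PN; apply: QP.
move=> Mx; have [[hMi M1] _] := hM.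
apply: M1; have Mu : M u by apply: JM.
have -> : 1 = u - 'X * x by rewrite /u addrK.
by apply: idlB => //; apply: idlM.
Qed.

End Hil.


Section Pow.
Variable R : comNzRingType.
Implicit Types (I J N P : R -> Prop) (c d : R) (a b p q g h f u v w r z y x : {poly R}).
Implicit Types (JJ MM LL QQ : {poly R} -> Prop).

Lemma inIMul I J p q : is_ideal I -> inI I p -> inI J q -> inI (ideal_mul I J) (p * q).
Proof.
move=> hI Hp Hq k; rewrite coefM; apply: idl_sumo; first exact: imul_ideal.
by move=> i; apply: imul_mul.
Qed.

Lemma pow_contract MM t (r : R) : is_ideal MM ->
  ideal_pow (contract MM) t r -> contract (ideal_pow MM t) r.
Proof.
move=> hM; elim: t r => [|t IH] r //= [s [Hs ->]].
exists [seq (pr.1%:P, pr.2%:P) | pr : R * R <- s]; split.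
  move=> pr /mapP [p' p's ->] /=; have [H1 H2] := Hs p' p's; split => //; exact: IH.
by rewrite big_map rmorph_sum; apply: eq_bigr => pr _; rewrite /= polyCM.
Qed.

Lemma powstab MM : maximal_ideal MM -> maximal_ideal (contract MM) ->
  forall t (r : R), contract (ideal_pow MM t) r <-> ideal_pow (contract MM) t r.
Proof.
move=> hM hm t r; split; last by apply: pow_contract; case: hM => [[]].
have [[hMi M1] _] := hM.
have [[hmi m1] _] := hm.
pose m := contract MM.
have [q0 [Mq0 mq0]] := notInContract hM.
have [f [Mf Hf fmin]] := monic_exists hm hMi (fun (a0 : R) Ha => Ha) (ex_intro _ q0 (conj Mq0 mq0)).
have genf := gen hm hMi (fun (a0 : R) Ha => Ha) Mf Hf fmin.
have sf2 : (1 < size f)%N.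
  rewrite ltnNge; apply/negP => H; apply: M1; by rewrite -(monic_size1 Hf H).
have claim : forall t x, ideal_pow MM t x ->
    exists a b, inI (ideal_pow m t) a /\ x = a + f * b.
  elim=> [|t' IH] x /=.
    by move=> _; exists x, 0; split; [by [] | rewrite mulr0 addr0].
  move=> [s [Hs ->]].
  have hI := ipow_ideal t'.+1 hmi.
  elim: s Hs => [|p s IHs] Hs.
    by exists 0, 0; split; [exact: inI0 | rewrite big_nil mulr0 addr0].
  rewrite big_cons.
  have [a1 [b1 [Ha1 E1]]] : exists a b, inI (ideal_pow m t'.+1) a /\ p.1 * p.2 = a + f * b.
    have [H1 H2] := Hs p (mem_head _ _).
    have [a [b [Ha Ea]]] := IH _ H1.
    have [n [y [Nn En]]] := genf _ H2.
    exists (a * n), (b * (n + f * y) + a * y); split.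
      by apply: inIMul => //; apply: ipow_ideal.
    rewrite Ea En [X in _ = _ + X]mulrDr [LHS]mulrDl [a * (n + _)]mulrDr (mulrCA a f y).
    by rewrite -[f * b * _]mulrA [LHS]addrAC [RHS]addrA.
  have [a2 [b2 [Ha2 E2]]] := IHs (fun pp Hpp => Hs pp (@mem_behead _ (p :: s) _ Hpp)).
  exists (a1 + a2), (b1 + b2); split; first exact: inID.
  by rewrite E1 E2 mulrDr addrACA.
move=> Hr.
have [a [b [Ha Eab]]] := claim t _ Hr.
have hI := ipow_ideal t hmi.
have [e sf] : exists e, size f = e.+1 by case: (size f) sf2 => // e; exists e.
have [k Hk] := red hI sf (monicP Hf) Ha.
have [r' [w [sr' Hr' Ew]]] := Hk k (leqnn k).
rewrite expr1n scale1r in Ew.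
have E3 : r%:P - r' = (b + w) * f by rewrite Eab mulrDl -Ew (mulrC b f) [RHS]addrCA addrA.
have bw0 : b + w = 0.
  apply: NNPP => /eqP nz.
  have := congr1 (fun p => size p) E3; rewrite /= size_Mmonic // sf => Es.
  have : (size (r%:P - r')%R <= e)%N.
    apply: leq_trans (size_polyD _ _) _; rewrite geq_max size_polyN sr' andbT.
    apply: leq_trans (size_polyC_leq1 _) _; by rewrite sf ltnS in sf2.
  rewrite Es addnS /= => H; move: nz; apply/negP; rewrite negbK -size_poly_eq0.
  by move: H; rewrite -{2}(add0n e) leq_add2r leqn0.
have Er : r%:P = r' by apply/eqP; rewrite -subr_eq0 E3 bw0 mul0r.
by move: (Hr' 0%N); rewrite -Er coefC.
Qed.

End Pow.


Lemma field_hilbert (K : fieldType) : hilbert_ring K.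
Proof.
move=> P hP x; split; first by move=> Px M hM PM; apply: PM.
move=> H; apply: H => //.
have [[hPi P1] _] := hP.
split => // J hJ PJ.
case: (classic (exists a, J a /\ a != 0)) => [[a [Ja a0]] | Hn].
  right; apply: idl_one => //; rewrite -(mulVf a0); exact: idlM.
left=> y; split; last exact: PJ.
move=> Jy; case: (eqVneq y 0) => [->|y0]; first exact: idl0.
by exfalso; apply: Hn; exists y.
Qed.

Lemma mpoly_hilbert (K : fieldType) n : hilbert_ring (mpoly K n).
Proof.
elim: n => [|n IH] /=; first exact: field_hilbert.
exact: hilbertX.
Qed.

Theorem mainTheorem14 :
  (forall (R : idomainType), hilbert_ring R ->
     forall M : {poly R} -> Prop, maximal_ideal M ->
     forall t : nat, (1 <= t)%N ->
     forall r : R, contract (ideal_pow M t) r <-> ideal_pow (contract M) t r)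
  /\
  (forall (K : fieldType) (n : nat),
     forall M : mpoly K n.+1 -> Prop, maximal_ideal M ->
     forall t : nat, (1 <= t)%N ->
     forall r : mpoly K n,
       contract (ideal_pow M t) r <-> ideal_pow (contract M) t r).
Proof.
have P1 : forall (R : idomainType), hilbert_ring R ->
     forall M : {poly R} -> Prop, maximal_ideal M ->
     forall t : nat, (1 <= t)%N ->
     forall r : R, contract (ideal_pow M t) r <-> ideal_pow (contract M) t r.
  move=> R hR M hM t _ r; apply: powstab => //; exact: contract_max.
split => //.
move=> K n M hM t ht r.
exact (P1 (mpoly K n) (@mpoly_hilbert K n) M hM t ht r).
Qed.
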